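(* Let $A$ be a real reduced multiring. Define a ternary relation $D$ on $A$ by $d\in D(a,b)$ iff $d\in d^2a+d^2b$. Then $(A,\cdot,1,0,-1,D)$ is a real semigroup, and its transversal representation satisfies $D^t(a,b)=a+b$ for all $a,b\in A$.
   Context: A multiring is a tuple $(R,+,\cdot,-,0,1)$ with $+:R\times R\to\mathcal P(R)\setminus\{\emptyset\}$ satisfying: $z\in x+y\Rightarrow x\in z+(-y)$ and $y\in(-x)+z$; $y\in0+x\iff y=x$; $(x+y)+z=x+(y+z)$ (with $Z+w=\bigcup_{z\in Z}(z+w)$); $x+y=y+x$; $(R,\cdot,1)$ a commutative monoid; $a0=0$; $c\in a+b\Rightarrow cd\in ad+bd$. A multiring $A$ is real reduced if $1\ne0$ and for all $a,b,c,d$: $a^3=a$; $c\in a+ab^2\Rightarrow c=a$; $c,d\in a^2+b^2\Rightarrow c=d$. In $A$, $-1$ denotes $-(1)$. A ternary semigroup is $(S,\cdot,1,0,-1)$ with: $(S,\cdot,1)$ a commutative semigroup with unity; $x^3=x$; $-1\ne1$, $(-1)(-1)=1$; $x0=0$; $x=(-1)x\Rightarrow x=0$. A real semigroup is a ternary semigroup with a ternary relation $D$, where $a\in D^t(b,c)$ means $a\in D(b,c)$, $-b\in D(-a,c)$ and $-c\in D(b,-a)$ (with $-x=(-1)x$), satisfying: (RS0) $c\in D(a,b)\iff c\in D(b,a)$; (RS1) $a\in D(a,b)$; (RS2) $a\in D(b,c)\Rightarrow ad\in D(bd,cd)$; (RS3) $a\in D^t(b,c)$, $c\in D^t(d,e)\Rightarrow\exists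 x\in D^t(b,d)$ with $a\in D^t(x,e)$; (RS4) $e\in D(c^2a,d^2b)\Rightarrow e\in D(a,b)$; (RS5) $ad=bd$, $ae=be$, $c\in D(d,e)\Rightarrow ac=bc$; (RS6) $c\in D(a,b)\Rightarrow c\in D^t(c^2a,c^2b)$; (RS7) $D^t(a,-b)\cap D^t(b,-a)\ne\emptyset\Rightarrow a=b$; (RS8) $a\in D(b,c)\Rightarrow a^2\in D(b^2,c^2)$. *)

(* Defs.v *)
Set Implicit Arguments.

(* A multiring on a carrier T: [add x y z] means z \in x + y. *)
Record is_multiring (T : Type) (add : T -> T -> T -> Prop) (mul : T -> T -> T)
    (neg : T -> T) (zero one : T) : Prop := {
  mr_add_nonempty : forall x y, exists z, add x y z;
  mr_rev1 : forall x y z, add x y z -> add z (neg y) x;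
  mr_rev2 : forall x y z, add x y z -> add (neg x) z y;
  mr_zero : forall x y, add zero x y <-> y = x;
  mr_assoc : forall x y z w,
      (exists t, add x y t /\ add t z w) <-> (exists t, add y z t /\ add x t w);
  mr_comm : forall x y z, add x y z <-> add y x z;
  mr_mulA : forall x y z, mul x (mul y z) = mul (mul x y) z;
  mr_mulC : forall x y, mul x y = mul y x;
  mr_mul1 : forall x, mul one x = x;
  mr_mul0 : forall a, mul a zero = zero;
  mr_distr : forall a b c d, add a b c -> add (mul a d) (mul b d) (mul c d)
}.

Record is_real_reduced_multiring (T : Type) (add : T -> T -> T -> Prop)
    (mul : T -> T -> T) (neg : T -> T) (zero one : T) : Prop := {
  rr_multiring : @is_multiring T add mul neg zero one;
  rr_one_neq_zero : one <> zero;
  rr_cube : forall a, mul a (mul a a) = a;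
  rr_ax2 : forall a b c, add a (mul a (mul b b)) c -> c = a;
  rr_ax3 : forall a b c d, add (mul a a) (mul b b) c -> add (mul a a) (mul b b) d -> c = d
}.

(* Ternary semigroup (S, ., 1, 0, -1); [m1] is the distinguished element -1. *)
Record is_ternary_semigroup (S : Type) (mul : S -> S -> S) (one zero m1 : S) : Prop := {
  ts_mulA : forall x y z, mul x (mul y z) = mul (mul x y) z;
  ts_mulC : forall x y, mul x y = mul y x;
  ts_mul1 : forall x, mul one x = x;
  ts_cube : forall x, mul x (mul x x) = x;
  ts_m1_neq_one : m1 <> one;
  ts_m1m1 : mul m1 m1 = one;
  ts_mul0 : forall x, mul x zero = zero;
  ts_fix_m1 : forall x, x = mul m1 x -> x = zero
}.

(* [D b c a] means a \in D(b,c).  -x is (-1)x. *)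
Definition Dt (S : Type) (mul : S -> S -> S) (m1 : S) (D : S -> S -> S -> Prop)
    (b c a : S) : Prop :=
  D b c a /\ D (mul m1 a) c (mul m1 b) /\ D b (mul m1 a) (mul m1 c).

Record is_real_semigroup (S : Type) (mul : S -> S -> S) (one zero m1 : S)
    (D : S -> S -> S -> Prop) : Prop := {
  rs_ternary : @is_ternary_semigroup S mul one zero m1;
  RS0 : forall a b c, D a b c <-> D b a c;
  RS1 : forall a b, D a b a;
  RS2 : forall a b c d, D b c a -> D (mul b d) (mul c d) (mul a d);
  RS3 : forall a b c d e, Dt mul m1 D b c a -> Dt mul m1 D d e c ->
        exists x, Dt mul m1 D b d x /\ Dt mul m1 D x e a;
  RS4 : forall a b c d e, D (mul (mul c c) a) (mul (mul d d) b) e -> D a b e;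
  RS5 : forall a b c d e, mul a d = mul b d -> mul a e = mul b e -> D d e c ->
        mul a c = mul b c;
  RS6 : forall a b c, D a b c -> Dt mul m1 D (mul (mul c c) a) (mul (mul c c) b) c;
  RS7 : forall a b, (exists x, Dt mul m1 D a (mul m1 b) x /\ Dt mul m1 D b (mul m1 a) x) ->
        a = b;
  RS8 : forall a b c, D b c a -> D (mul b b) (mul c c) (mul a a)
}.

(* Main.v *)
Require Import Defs.
From Stdlib Require Import List Bool Arith.
Import ListNotations.

Section RR.
Variables (A : Type) (add : A -> A -> A -> Prop) (mul : A -> A -> A)
  (neg : A -> A) (zero one : A).
Hypothesis H : is_real_reduced_multiring add mul neg zero one.

Let HM := rr_multiring H.

Lemma ne x y : exists z, add x y z. Proof. exact (mr_add_nonempty HM x y). Qed.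
Lemma addC x y z : add x y z -> add y x z. Proof. apply (mr_comm HM). Qed.
Lemma rev1 x y z : add x y z -> add z (neg y) x. Proof. apply (mr_rev1 HM). Qed.
Lemma rev2 x y z : add x y z -> add (neg x) z y. Proof. apply (mr_rev2 HM). Qed.
Lemma zl x y : add zero x y <-> y = x. Proof. apply (mr_zero HM). Qed.
Lemma mA x y z : mul x (mul y z) = mul (mul x y) z. Proof. apply (mr_mulA HM). Qed.
Lemma mC x y : mul x y = mul y x. Proof. apply (mr_mulC HM). Qed.
Lemma m1l x : mul one x = x. Proof. apply (mr_mul1 HM). Qed.
Lemma m0r x : mul x zero = zero. Proof. apply (mr_mul0 HM). Qed.
Lemma distr a b c d : add a b c -> add (mul a d) (mul b d) (mul c d).
Proof. apply (mr_distr HM). Qed.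
Lemma cube a : mul a (mul a a) = a. Proof. apply (rr_cube H). Qed.
Lemma rr2 a b c : add a (mul a (mul b b)) c -> c = a. Proof. apply (rr_ax2 H). Qed.
Lemma rr3 a b c d : add (mul a a) (mul b b) c -> add (mul a a) (mul b b) d -> c = d.
Proof. apply (rr_ax3 H). Qed.
Lemma AS1 x y z t w : add x y t -> add t z w -> exists s, add y z s /\ add x s w.
Proof. intros h1 h2. apply (mr_assoc HM). eauto. Qed.
Lemma AS2 x y z s w : add y z s -> add x s w -> exists t, add x y t /\ add t z w.
Proof. intros h1 h2. apply (mr_assoc HM). eauto. Qed.

Lemma m1r x : mul x one = x. Proof. rewrite mC; apply m1l. Qed.
Lemma m0l x : mul zero x = zero. Proof. rewrite mC; apply m0r. Qed.
Lemma add0l x : add zero x x. Proof. apply zl; reflexivity. Qed.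
Lemma inv x : add x (neg x) zero. Proof. apply (rev1 zero x x), add0l. Qed.
Lemma uniq_inv x y : add x y zero -> y = neg x.
Proof. intro h. apply rev2, addC, zl in h. exact h. Qed.
Lemma nn x : neg (neg x) = x.
Proof. symmetry. apply uniq_inv. apply addC, inv. Qed.
Lemma neg0 : neg zero = zero.
Proof. symmetry. apply uniq_inv, add0l. Qed.
Lemma negm x : neg x = mul (neg one) x.
Proof.
  symmetry. apply uniq_inv. pose proof (distr _ _ _ x (inv one)) as h.
  rewrite m1l, m0l in h. exact h.
Qed.
Lemma m1m1 : mul (neg one) (neg one) = one.
Proof. rewrite <- negm. apply nn. Qed.

Inductive tm : Type := tA (n : nat) | t1 | t0 | tN (a : tm) | tM (a b : tm).
Fixpoint den (env : list A) (t : tm) : A :=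
  match t with
  | tA n => nth n env one | t1 => one | t0 => zero
  | tN a => neg (den env a) | tM a b => mul (den env a) (den env b) end.
Record nf := NF { nz : bool; ns : bool; nl : list nat }.
Definition addexp (e f : nat) : nat :=
  match e, f with 0, _ => f | _, 0 => e | 1, 1 => 2 | 1, _ => 1 | _, 1 => 1 | _, _ => 2 end.
Fixpoint zipadd (l1 l2 : list nat) : list nat :=
  match l1, l2 with nil, _ => l2 | _, nil => l1
  | e :: l1', f :: l2' => addexp e f :: zipadd l1' l2' end.
Fixpoint single (n : nat) : list nat := match n with 0 => [1] | S n => 0 :: single n end.
Fixpoint norm (t : tm) : nf :=
  match t with
  | tA n => NF false false (single n)
  | t1 => NF false false nil
  | t0 => NF true false nil
  | tN a => let r := norm a in NF (nz r) (negb (ns r)) (nl r)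
  | tM a b => let r := norm a in let s := norm b in
      NF (nz r || nz s) (xorb (ns r) (ns s)) (zipadd (nl r) (nl s)) end.
Definition pw (x : A) (e : nat) : A := match e with 0 => one | 1 => x | _ => mul x x end.
Fixpoint pden (env : list A) (l : list nat) : A :=
  match l with nil => one | e :: l' => mul (pw (nth 0 env one) e) (pden (tl env) l') end.
Definition sg (s : bool) : A := if s then neg one else one.
Definition nden env r := if nz r then zero else mul (sg (ns r)) (pden env (nl r)).

Lemma swap4 a b c d : mul (mul a b) (mul c d) = mul (mul a c) (mul b d).
Proof.
  rewrite <- !mA. f_equal. rewrite !mA. f_equal. apply mC.
Qed.
Lemma sq2 x : mul (mul x x) (mul x x) = mul x x.
Proof. rewrite <- mA. rewrite cube. reflexivity. Qed.

Lemma pw_add x e f : pw x (addexp e f) = mul (pw x e) (pw x f).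
Proof.
  destruct e as [|[|e]]; destruct f as [|[|f]]; simpl;
  rewrite ?m1l, ?m1r, ?cube, ?sq2; try reflexivity.
  rewrite mC, cube. reflexivity.
Qed.

Lemma pden_zip env l1 l2 : pden env (zipadd l1 l2) = mul (pden env l1) (pden env l2).
Proof.
  revert l2 env. induction l1 as [|e l1 IH]; intros [|f l2] env; simpl.
  - rewrite m1l; reflexivity.
  - rewrite m1l; reflexivity.
  - rewrite m1r; reflexivity.
  - rewrite pw_add, IH. apply swap4.
Qed.

Lemma nth_nil n : nth n (@nil A) one = one. Proof. destruct n; reflexivity. Qed.

Lemma pden_single env n : pden env (single n) = nth n env one.
Proof.
  revert env. induction n as [|n IH]; intro env; simpl.
  - apply m1r.
  - rewrite IH, m1l. destruct env; simpl; [apply nth_nil|reflexivity].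
Qed.

Lemma sg_x s1 s2 : mul (sg s1) (sg s2) = sg (xorb s1 s2).
Proof.
  destruct s1, s2; simpl; rewrite ?m1l, ?m1r, ?m1m1; reflexivity.
Qed.

Lemma sound env t : den env t = nden env (norm t).
Proof.
  induction t as [n| | |a IH|a IHa b IHb]; unfold nden; simpl.
  - rewrite m1l, pden_single; reflexivity.
  - symmetry; apply m1l.
  - reflexivity.
  - rewrite IH. unfold nden. destruct (nz (norm a)); simpl.
    + apply neg0.
    + rewrite negm, mA. f_equal. destruct (ns (norm a)); simpl;
      rewrite ?m1m1, ?m1r; reflexivity.
  - rewrite IHa, IHb. unfold nden.
    destruct (nz (norm a)); simpl; [apply m0l|].
    destruct (nz (norm b)); simpl; [apply m0r|].
    rewrite pden_zip, swap4, sg_x. reflexivity.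
Qed.

Definition cls (e : nat) : nat := match e with 0 => 0 | 1 => 1 | _ => 2 end.
Definition allz (l : list nat) : bool := forallb (fun e => Nat.eqb (cls e) 0) l.
Fixpoint leq_t (l1 l2 : list nat) : bool :=
  match l1, l2 with
  | nil, _ => allz l2
  | _, nil => allz l1
  | e :: l1', f :: l2' => Nat.eqb (cls e) (cls f) && leq_t l1' l2' end.
Lemma pw_cls x e : pw x (cls e) = pw x e. Proof. destruct e as [|[|]]; reflexivity. Qed.
Lemma allz_one env l : allz l = true -> pden env l = one.
Proof.
  revert env; induction l as [|e l IH]; intros env h; simpl in *; [reflexivity|].
  apply andb_prop in h as [h1 h2]. apply Nat.eqb_eq in h1.
  rewrite <- pw_cls, h1, IH by exact h2. apply m1l.
Qed.
Lemma leq_t_sound env l1 l2 : leq_t l1 l2 = true -> pden env l1 = pden env l2.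
Proof.
  revert l2 env. induction l1 as [|e l1 IH]; intros l2 env h.
  - simpl in h. rewrite (allz_one env l2 h). reflexivity.
  - destruct l2 as [|f l2].
    + change (allz (e :: l1) = true) in h. rewrite (allz_one env _ h). reflexivity.
    + simpl in h. apply andb_prop in h as [h1 h2]. apply Nat.eqb_eq in h1.
      simpl. rewrite <- (pw_cls _ e), h1, pw_cls, (IH l2 _ h2). reflexivity.
Qed.
Definition nfeq (r s : nf) : bool :=
  if nz r then nz s else negb (nz s) && Bool.eqb (ns r) (ns s) && leq_t (nl r) (nl s).
Lemma nfeq_sound env r s : nfeq r s = true -> nden env r = nden env s.
Proof.
  unfold nfeq, nden. destruct (nz r); intro h; [rewrite h; reflexivity|].
  apply andb_prop in h as [h h3]. apply andb_prop in h as [h1 h2].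
  destruct (nz s); [discriminate|]. apply Bool.eqb_prop in h2. rewrite h2.
  rewrite (leq_t_sound env _ _ h3). reflexivity.
Qed.
Lemma meq_sound env a b : nfeq (norm a) (norm b) = true -> den env a = den env b.
Proof. intro h. rewrite !sound. apply nfeq_sound, h. Qed.

Ltac inList x ls := match ls with | nil => false | x :: _ => true | _ :: ?l => inList x l end.
Ltac addToList x ls := let b := inList x ls in
  match b with true => ls | false => constr:(x :: ls) end.
Ltac lookup x ls := match ls with | x :: _ => O | _ :: ?l => let n := lookup x l in constr:(S n) end.
Ltac allVars xs e := match e with
  | mul ?a ?b => let xs := allVars xs a in allVars xs b
  | neg ?a => allVars xs a
  | one => xs | zero => xs
  | _ => addToList e xs end.
Ltac reify xs e := match e with
  | one => constr:(t1) | zero => constr:(t0)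
  | neg ?a => let r := reify xs a in constr:(tN r)
  | mul ?a ?b => let r := reify xs a in let s := reify xs b in constr:(tM r s)
  | _ => let n := lookup e xs in constr:(tA n) end.
Ltac meq := match goal with |- ?x = ?y =>
  let xs := allVars (@nil A) x in let xs := allVars xs y in
  let a := reify xs x in let b := reify xs y in
  change (den xs a = den xs b); apply meq_sound; vm_compute; reflexivity end.


Lemma add_eq x y z x' y' z' : add x y z -> x = x' -> y = y' -> z = z' -> add x' y' z'.
Proof. intros h -> -> ->; exact h. Qed.
Ltac from h := refine (add_eq _ _ _ _ _ _ h _ _ _); meq.

Lemma addN x y z : add x y z -> add (neg x) (neg y) (neg z).
Proof. intro h. pose proof (distr _ _ _ (neg one) h) as h'. from h'. Qed.

Lemma rr2u a b c : add a (mul a (mul b b)) c -> c = a. Proof. apply rr2. Qed.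
Lemma selfu a t : add a a t -> t = a.
Proof. intro h. apply (rr2 a one). from h. Qed.
Lemma self a : add a a a.
Proof. destruct (ne a a) as [t h]. pose proof (selfu _ _ h). subst. exact h. Qed.
Lemma rr2e a b : add a (mul a (mul b b)) a.
Proof. destruct (ne a (mul a (mul b b))) as [t h]. pose proof (rr2 _ _ _ h). subst. exact h. Qed.

Lemma K x : add one x one.
Proof.
  destruct (ne one x) as [c hc].
  pose proof (distr _ _ _ c hc) as h1.
  pose proof (distr _ _ _ x hc) as h2.
  assert (h1' : add c (mul c x) (mul c c)) by from h1.
  assert (h2' : add x (mul x x) (mul c x)) by from h2.
  destruct (AS1 _ _ _ _ _ hc h1') as [s [hs1 hs2]].
  destruct (AS2 _ _ _ _ _ h2' hs1) as [t [ht1 ht2]].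
  apply selfu in ht1; subst t.
  apply addC in ht2.
  destruct (AS2 _ _ _ _ _ ht2 hs2) as [t [ht1 ht3]].
  assert (t = one) by (apply (rr2 one x); from ht1). subst t.
  (* c*c in 1 + x *)
  assert (h4 : add one (mul c c) one) by (pose proof (rr2e one c) as h; from h).
  destruct (AS2 _ _ _ _ _ ht3 h4) as [t [ht4 ht5]].
  apply selfu in ht4; subst t. exact ht5.
Qed.

Lemma Kmul a x : add a (mul a x) a.
Proof. pose proof (distr _ _ _ a (K x)) as h. from h. Qed.

Lemma m11 y : add one (neg one) y.
Proof.
  pose proof (K (neg y)) as h. apply rev2, addN in h. from h.
Qed.
Lemma gm g y : add g (neg g) (mul g y).
Proof. pose proof (distr _ _ _ g (m11 y)) as h. from h. Qed.

Lemma closure g p q w : add g (neg g) p -> add g (neg g) q -> add p q w -> add g (neg g) w.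
Proof.
  intros hp hq hw.
  destruct (AS1 _ _ _ _ _ hp hw) as [s [hs1 hs2]].
  apply addC in hq.
  destruct (AS2 _ _ _ _ _ hq hs1) as [t [ht1 ht2]].
  apply selfu in ht1; subst t. apply addC in ht2.
  destruct (AS2 _ _ _ _ _ ht2 hs2) as [t [ht1 ht3]].
  apply selfu in ht1; subst t. exact ht3.
Qed.

Lemma Ilem g z : mul g g = g -> add g (neg g) z -> mul g z = z.
Proof.
  intros hg hz.
  pose proof (distr _ _ _ z hz) as h.
  assert (h1 : add g (neg g) (mul (neg g) z)).
  { replace (mul (neg g) z) with (mul g (neg z)) by meq. apply gm. }
  assert (h0 : add g (neg g) (mul g z)) by apply gm.
  pose proof (closure _ _ _ _ h0 h1 h) as hzz.
  apply rev1 in hzz. rewrite nn in hzz.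
  pose proof (distr _ _ _ (mul z z) hzz) as h2.
  assert (h3 : add (mul z z) (mul (mul z z) (mul g g)) (mul g (mul z z))).
  { refine (add_eq _ _ _ _ _ _ h2 _ _ _); [meq| |meq]. rewrite hg. meq. }
  apply rr2 in h3.
  transitivity (mul (mul g (mul z z)) z); [meq|]. rewrite h3. meq.
Qed.

Lemma SLu g u v y : mul g g = g -> mul g u = u -> mul g v = v -> add u v y -> mul g y = y.
Proof.
  intros hg hu hv hy. apply Ilem; [exact hg|].
  assert (hu' : add g (neg g) u) by (rewrite <- hu; apply gm).
  assert (hv' : add g (neg g) v) by (rewrite <- hv; apply gm).
  exact (closure _ _ _ _ hu' hv' hy).
Qed.

Lemma join a b : exists f, add (mul a a) (mul b b) f /\ mul f f = f /\
  mul f a = a /\ mul f b = b.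
Proof.
  destruct (ne (mul a a) (mul b b)) as [f hf].
  assert (ha : mul f (mul a a) = mul a a).
  { pose proof (distr _ _ _ (mul a a) hf) as h.
    apply (rr2 (mul a a) b). from h. }
  assert (hb : mul f (mul b b) = mul b b).
  { pose proof (distr _ _ _ (mul b b) hf) as h. apply addC in h.
    apply (rr2 (mul b b) a). from h. }
  exists f. split; [exact hf|]. split; [|split].
  - pose proof (distr _ _ _ f hf) as h.
    refine (rr3 a b _ _ _ hf).
    refine (add_eq _ _ _ _ _ _ h _ _ _); [| |reflexivity].
    + rewrite mC; exact ha.
    + rewrite mC; exact hb.
  - transitivity (mul (mul f (mul a a)) a); [|rewrite ha]; meq.
  - transitivity (mul (mul f (mul b b)) b); [|rewrite hb]; meq.
Qed.

Definition Dd a b d := add (mul (mul d d) a) (mul (mul d d) b) d.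

Lemma Dt_iff a b d : Dt mul (neg one) Dd a b d <-> add a b d.
Proof.
  unfold Dt, Dd. split.
  - intros [hi [hii hiii]].
    apply rev1, addN in hii.
    assert (h2 : add a (mul (mul a a) b) (mul (mul a a) d)) by from hii.
    apply addC, rev1, addN in hiii.
    assert (h3 : add b (mul (mul b b) a) (mul (mul b b) d)) by from hiii.
    destruct (join a b) as [f [hf [hff [hfa hfb]]]].
    assert (hd : mul f d = d).
    { refine (SLu _ _ _ _ hff _ _ hi).
      - transitivity (mul (mul d d) (mul f a)); [meq|]. rewrite hfa; reflexivity.
      - transitivity (mul (mul d d) (mul f b)); [meq|]. rewrite hfb; reflexivity. }
    pose proof (distr _ _ _ d hf) as hfd.
    assert (hfd' : add (mul (mul a a) d) (mul (mul b b) d) (mul f d)) by from hfd.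
    destruct (AS1 _ _ _ _ _ h2 hfd') as [s [hs1 hs2]].
    destruct (AS2 _ _ _ _ _ h3 hs1) as [t [ht1 ht2]].
    assert (t = b) by (apply addC in ht1; apply (rr2 b a); from ht1). subst t.
    apply addC in ht2.
    destruct (AS2 _ _ _ _ _ ht2 hs2) as [t [ht3 ht4]].
    assert (t = a) by (apply (rr2 a b); from ht3). subst t.
    rewrite hd in ht4. exact ht4.
  - intro h. split; [|split].
    + pose proof (distr _ _ _ (mul d d) h) as h'. from h'.
    + pose proof (addN _ _ _ (rev1 _ _ _ h)) as h1.
      pose proof (distr _ _ _ (mul a a) h1) as h'. from h'.
    + pose proof (addN _ _ _ (rev2 _ _ _ h)) as h1.
      pose proof (distr _ _ _ (mul b b) h1) as h'. from h'.
Qed.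


Lemma L_RS1 a b : Dd a b a.
Proof. unfold Dd. pose proof (Kmul a (mul a b)) as h. from h. Qed.

Lemma L_RS2 a b c d : Dd b c a -> Dd (mul b d) (mul c d) (mul a d).
Proof. unfold Dd. intro h. pose proof (distr _ _ _ d h) as h'. from h'. Qed.

Lemma L_RS3 a b c d e : Dt mul (neg one) Dd b c a -> Dt mul (neg one) Dd d e c ->
  exists x, Dt mul (neg one) Dd b d x /\ Dt mul (neg one) Dd x e a.
Proof.
  rewrite !Dt_iff. intros h1 h2.
  destruct (AS2 _ _ _ _ _ h2 h1) as [t [ht1 ht2]].
  exists t. rewrite !Dt_iff. auto.
Qed.

Lemma L_RS4 a b c d e : Dd (mul (mul c c) a) (mul (mul d d) b) e -> Dd a b e.
Proof.
  unfold Dd. intro h.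
  set (A' := mul (mul e e) a). set (B' := mul (mul e e) b).
  destruct (ne A' B') as [w hw].
  pose proof (distr _ _ _ (mul e e) hw) as ht.
  assert (ht' : add B' A' (mul (mul e e) w)) by (apply addC; subst A' B'; from ht).
  assert (he : add e (mul (mul e e) w) e) by (pose proof (Kmul e (mul e w)) as h'; from h').
  destruct (AS1 _ _ _ _ _ h he) as [s [hs1 hs2]].
  destruct (AS2 _ _ _ _ _ ht' hs1) as [u [hu1 hu2]].
  assert (u = B') by (apply addC in hu1; apply (rr2 B' d); subst B'; from hu1). subst u.
  apply addC in hu2.
  destruct (AS2 _ _ _ _ _ hu2 hs2) as [v [hv1 hv2]].
  assert (v = A') by (apply addC in hv1; apply (rr2 A' c); subst A'; from hv1). subst v.
  exact hv2.
Qed.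

Lemma SG x d e f y y' : mul f f = f -> mul f d = d -> mul f e = e ->
  add (mul (mul d d) x) (mul (mul e e) x) y ->
  add (mul (mul d d) x) (mul (mul e e) x) y' -> y = y'.
Proof.
  intros hff hfd hfe hy hy'.
  assert (hxy : mul x y = mul x y').
  { pose proof (distr _ _ _ x hy) as h1. pose proof (distr _ _ _ x hy') as h2.
    apply (rr3 (mul x d) (mul x e)); [from h1|from h2]. }
  set (g := mul (mul x x) f).
  assert (hgg : mul g g = g).
  { subst g. transitivity (mul (mul (mul x x) (mul x x)) (mul f f)); [meq|].
    rewrite hff. meq. }
  assert (hgd : mul g (mul (mul d d) x) = mul (mul d d) x).
  { subst g. transitivity (mul (mul (mul f d) d) (mul x (mul x x))); [meq|].
    rewrite hfd, cube. reflexivity. }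
  assert (hge : mul g (mul (mul e e) x) = mul (mul e e) x).
  { subst g. transitivity (mul (mul (mul f e) e) (mul x (mul x x))); [meq|].
    rewrite hfe, cube. reflexivity. }
  pose proof (SLu _ _ _ _ hgg hgd hge hy) as e1.
  pose proof (SLu _ _ _ _ hgg hgd hge hy') as e2.
  rewrite <- e1, <- e2. subst g.
  transitivity (mul (mul x f) (mul x y)); [meq|]. rewrite hxy. meq.
Qed.

Lemma L_RS5 a b c d e : mul a d = mul b d -> mul a e = mul b e -> Dd d e c ->
  mul a c = mul b c.
Proof.
  unfold Dd. intros had hae hc.
  destruct (join d e) as [f [hf [hff [hfd hfe]]]].
  assert (hcf : mul f c = c).
  { refine (SLu _ _ _ _ hff _ _ hc).
    - transitivity (mul (mul c c) (mul f d)); [meq|]. rewrite hfd; reflexivity.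
    - transitivity (mul (mul c c) (mul f e)); [meq|]. rewrite hfe; reflexivity. }
  pose proof (distr _ _ _ a hf) as h1.
  pose proof (distr _ _ _ b hf) as h2.
  assert (e1 : mul (mul d d) b = mul (mul d d) a).
  { transitivity (mul d (mul b d)); [meq|]. rewrite <- had. meq. }
  assert (e2 : mul (mul e e) b = mul (mul e e) a).
  { transitivity (mul e (mul b e)); [meq|]. rewrite <- hae. meq. }
  assert (h2' : add (mul (mul d d) a) (mul (mul e e) a) (mul f b)).
  { rewrite <- e1, <- e2. from h2. }
  assert (h1' : add (mul (mul d d) a) (mul (mul e e) a) (mul f a)) by from h1.
  pose proof (SG _ _ _ _ _ _ hff hfd hfe h1' h2') as hab.
  rewrite <- hcf. transitivity (mul (mul f a) c); [meq|]. rewrite hab. meq.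
Qed.

Lemma L_RS6 a b c : Dd a b c -> Dt mul (neg one) Dd (mul (mul c c) a) (mul (mul c c) b) c.
Proof. intro h. apply Dt_iff. exact h. Qed.

Lemma L_RS7 a b : (exists x, Dt mul (neg one) Dd a (mul (neg one) b) x /\
   Dt mul (neg one) Dd b (mul (neg one) a) x) -> a = b.
Proof.
  intros [x [h1 h2]]. rewrite Dt_iff in h1, h2.
  apply addN, addC in h2.
  assert (h2' : add a (mul (neg one) b) (neg x)) by from h2.
  pose proof (inv x) as h0.
  destruct (AS1 _ _ _ _ _ h1 h0) as [s [hs1 hs2]].
  apply addC in h2'.
  destruct (AS2 _ _ _ _ _ h2' hs1) as [t [ht1 ht2]].
  apply selfu in ht1; subst t. apply addC in ht2.
  destruct (AS2 _ _ _ _ _ ht2 hs2) as [t [ht1 ht3]].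
  apply selfu in ht1; subst t.
  apply uniq_inv in ht3. rewrite <- negm in ht3.
  rewrite <- (nn a), <- ht3, nn. reflexivity.
Qed.

Lemma L_RS8 a b c : Dd b c a -> Dd (mul b b) (mul c c) (mul a a).
Proof.
  unfold Dd. intro h.
  destruct (join b c) as [f [hf [hff [hfb hfc]]]].
  assert (hfa : mul f a = a).
  { refine (SLu _ _ _ _ hff _ _ h).
    - transitivity (mul (mul a a) (mul f b)); [meq|]. rewrite hfb; reflexivity.
    - transitivity (mul (mul a a) (mul f c)); [meq|]. rewrite hfc; reflexivity. }
  pose proof (distr _ _ _ (mul a a) hf) as h1.
  refine (add_eq _ _ _ _ _ _ h1 _ _ _); [meq|meq|].
  transitivity (mul (mul f a) a); [meq|]. rewrite hfa. reflexivity.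
Qed.

Lemma L_RS0 a b c : Dd a b c <-> Dd b a c.
Proof. unfold Dd; split; apply addC. Qed.

Lemma L_ts : is_ternary_semigroup mul one zero (neg one).
Proof.
  constructor.
  - apply mA.
  - apply mC.
  - apply m1l.
  - apply cube.
  - intro e. pose proof (inv one) as h. rewrite e in h. apply selfu in h.
    apply (rr_one_neq_zero H). symmetry; exact h.
  - apply m1m1.
  - apply m0r.
  - intros x e. pose proof (inv x) as h. rewrite negm, <- e in h.
    apply selfu in h. symmetry; exact h.
Qed.

Lemma L_rs : is_real_semigroup mul one zero (neg one) Dd.
Proof.
  constructor.
  - exact L_ts.
  - apply L_RS0.
  - apply L_RS1.
  - apply L_RS2.
  - apply L_RS3.
  - apply L_RS4.
  - apply L_RS5.
  - apply L_RS6.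
  - apply L_RS7.
  - apply L_RS8.
Qed.

End RR.

Theorem theorem6p10 (A : Type) (add : A -> A -> A -> Prop) (mul : A -> A -> A)
    (neg : A -> A) (zero one : A) :
  is_real_reduced_multiring add mul neg zero one ->
  let D := fun a b d => add (mul (mul d d) a) (mul (mul d d) b) d in
  is_real_semigroup mul one zero (neg one) D /\
  (forall a b d, Dt mul (neg one) D a b d <-> add a b d).
Proof.
  intros H D. split.
  - exact (L_rs A add mul neg zero one H).
  - intros a b d. exact (Dt_iff A add mul neg zero one H a b d).
Qed.
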